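(* Let $\mathcal{E}=\{e_1,\dots,e_n\}$ be an orthonormal basis for $\mathbb{R}^n$. If $M$ is a $k$-dimensional $\mathcal{E}$-PR subspace and there exists $x\in M$ with $|\mathrm{supp}(x)|=k$, then $M$ is a maximal $\mathcal{E}$-PR subspace.
   Context: For $x=\sum_{i=1}^n\alpha_ie_i$, $\mathrm{supp}(x)=\{i:\alpha_i\neq0\}$. A subspace $M$ is an $\mathcal{E}$-PR subspace if $\{P_Me_i\}_{i=1}^n$ (with $P_M$ the orthogonal projection onto $M$) spans $M$ and whenever $x,y\in M$ satisfy $|\langle x,P_Me_i\rangle|=|\langle y,P_Me_i\rangle|$ for all $i$, then $x=\pm y$. It is maximal if it is not a proper subspace of another $\mathcal{E}$-PR subspace. *)

(* Defs.v *)
(* R^n as row vectors 'rV[R]_n over R : realType,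
   subspaces as row spaces of square matrices (mxalgebra). *)
From HB Require Import structures.
From mathcomp Require Import all_boot all_order all_algebra.
From mathcomp Require Import reals.
Set Implicit Arguments. Unset Strict Implicit. Unset Printing Implicit Defensive.
Import Order.TTheory GRing.Theory Num.Theory.
Local Open Scope ring_scope.

Definition dotv (R : realType) (n : nat) (u v : 'rV[R]_n) : R := (u *m v^T) 0 0.

Definition orthonormal_basis (R : realType) (n : nat) (e : 'I_n -> 'rV[R]_n) :=
  forall i j : 'I_n, dotv (e i) (e j) = (i == j)%:R.

(* Orthogonal projection onto the row space of M: with B = row_base M
   (rows form a basis of M), P = B^T (B B^T)^{-1} B, acting on row vectors. *)
Definition projmx (R : realType) (n : nat) (M : 'M[R]_n) :
    'M[R]_(n, n) :=
  let B := row_base M in (B^T *m invmx (B *m B^T)) *m B.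

Definition proj (R : realType) (n : nat) (M : 'M[R]_n) (v : 'rV[R]_n) : 'rV[R]_n :=
  v *m projmx M.

Definition ePR (R : realType) (n : nat) (e : 'I_n -> 'rV[R]_n) (M : 'M[R]_n) : Prop :=
  ((\matrix_(i < n) proj M (e i)) == M)%MS /\
  forall x y : 'rV[R]_n, (x <= M)%MS -> (y <= M)%MS ->
    (forall i : 'I_n, `|dotv x (proj M (e i))| = `|dotv y (proj M (e i))|) ->
    x = y \/ x = - y.

Definition maximal_ePR (R : realType) (n : nat) (e : 'I_n -> 'rV[R]_n)
    (M : 'M[R]_n) : Prop :=
  ePR e M /\ ~ (exists N : 'M[R]_n, ePR e N /\ (M < N)%MS).

(* Main.v *)
Require Import Defs.
From HB Require Import structures.
From mathcomp Require Import all_boot all_order all_algebra.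
From mathcomp Require Import reals.
From mathcomp Require Import lra.
Import Order.TTheory GRing.Theory Num.Theory.
Local Open Scope ring_scope.

Section Aux.
Variables (R : realType) (n : nat).

Lemma dotv_self_eq0 (y : 'rV[R]_n) : dotv y y = 0 -> y = 0.
Proof.
rewrite /dotv mxE => h.
have h2 : \sum_j y 0 j ^+ 2 = 0.
  rewrite -[RHS]h; apply: eq_bigr => j _; by rewrite mxE expr2.
apply/rowP => j; rewrite mxE.
have := psumr_eq0P (fun i _ => sqr_ge0 (y 0 i)) h2; move=> /(_ j isT).
by move/eqP; rewrite sqrf_eq0 => /eqP.
Qed.

Lemma BBt_unit (N : 'M[R]_n) :
  row_base N *m (row_base N)^T \in unitmx.
Proof.
rewrite -row_free_unit; apply: inj_row_free => v H.
have : dotv (v *m row_base N) (v *m row_base N) = 0.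
  by rewrite /dotv trmx_mul mulmxA -(mulmxA v) H mul0mx mxE.
move/dotv_self_eq0 => h.
apply: (row_free_inj (row_base_free N)); by rewrite h mul0mx.
Qed.

Lemma proj_fix_gen m (B : 'M[R]_(m, n)) (D : 'rV[R]_m) :
  B *m B^T \in unitmx ->
  (D *m B) *m ((B^T *m invmx (B *m B^T)) *m B)^T = D *m B.
Proof.
move=> hu.
rewrite !trmx_mul trmxK trmx_inv trmx_mul trmxK.
rewrite !mulmxA -(mulmxA D) -(mulmxA _ _ (invmx _)) (mulmxV hu) mulmx1.
by [].
Qed.

Lemma proj_fix (x : 'rV[R]_n) (N : 'M[R]_n) :
  (x <= N)%MS -> x *m (projmx N)^T = x.
Proof.
move=> xN.
have : (x <= row_base N)%MS by rewrite eq_row_base.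
case/submxP => D ->.
exact: proj_fix_gen (BBt_unit N).
Qed.

Lemma dotv_proj (x u : 'rV[R]_n) (N : 'M[R]_n) :
  (x <= N)%MS -> dotv x (proj N u) = dotv x u.
Proof.
move=> xN; by rewrite /dotv /proj trmx_mul mulmxA proj_fix.
Qed.

Lemma dotvDl (x y z : 'rV[R]_n) : dotv (x + y) z = dotv x z + dotv y z.
Proof. by rewrite /dotv mulmxDl mxE. Qed.

Lemma dotvNl (x z : 'rV[R]_n) : dotv (- x) z = - dotv x z.
Proof. by rewrite /dotv mulNmx mxE. Qed.

Lemma dotv_sum (a : 'I_n -> R) (e : 'I_n -> 'rV[R]_n) j :
  orthonormal_basis e -> dotv (\sum_i a i *: e i) (e j) = a j.
Proof.
move=> on; rewrite /dotv mulmx_suml summxE.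
rewrite (bigD1 j) //= big1 => [|i ij].
  by rewrite -scalemxAl mxE -/(dotv _ _) on eqxx mulr1 addr0.
by rewrite -scalemxAl mxE -/(dotv _ _) on (negbTE ij) mulr0.
Qed.

End Aux.

Theorem corollary4p2 (R : realType) (n k : nat) (e : 'I_n -> 'rV[R]_n)
    (M : 'M[R]_n) :
  orthonormal_basis e ->
  (0 < k)%N ->
  \rank M = k ->
  ePR e M ->
  (exists (x : 'rV[R]_n) (alpha : 'I_n -> R),
      (x <= M)%MS /\ x = \sum_(i < n) alpha i *: e i /\
      #|[set i | alpha i != 0]| = k) ->
  maximal_ePR e M.
Proof.
move=> on k0 rk ePRM [x [a [xM [xdef card]]]].
split => //.
case=> N [[_ prN] MN].
set S := [set i | a i != 0].
have rkN : (k < \rank N)%N by rewrite -rk rank_ltmx.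
have xN : (x <= N)%MS := submx_trans xM (ltmxW MN).
pose C : 'M[R]_(#|S|, n) := \matrix_(j < #|S|) e (enum_val j).
pose K := row_base N *m C^T.
have : kermx K != 0.
  rewrite kermx_eq0 /row_free; apply/negP => /eqP h.
  have := rank_leq_col K; rewrite h card => hh.
  by move: hh; rewrite leqNgt rkN.
case/rowV0Pn => w /sub_kermxP wK w0.
set v := w *m row_base N.
have vN : (v <= N)%MS.
  by apply: submx_trans (submxMl _ _) _; rewrite eq_row_base.
have v0 : v != 0.
  apply: contra w0 => /eqP h; apply/eqP.
  by apply: (row_free_inj (row_base_free N)); rewrite mul0mx.
have vS : forall i, a i != 0 -> dotv v (e i) = 0.
  move=> i ai; have iS : i \in S by rewrite inE.
  have : (v *m C^T) 0 (enum_rank_in iS i) = 0.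
    by rewrite /v -mulmxA wK mxE.
  rewrite /dotv !mxE => hh; rewrite -[RHS]hh; apply: eq_bigr => l _.
  by rewrite !mxE enum_rankK_in.
have xa : forall i, dotv x (e i) = a i by move=> i; rewrite xdef dotv_sum.
have xvN := addmx_sub xN vN.
have vN' : (- v <= N)%MS by rewrite eqmx_opp.
have xvN' := addmx_sub xN vN'.
case: (prN (x + v) (x - v) xvN xvN') => [i|h|h].
- rewrite !dotv_proj // !dotvDl dotvNl xa.
  case: (eqVneq (a i) 0) => [->|ai]; first by rewrite add0r sub0r normrN.
  by rewrite vS // addr0 subr0.
- move/negP: v0; apply; apply/eqP/rowP => j.
  have := congr1 (fun m : 'rV[R]_n => m 0 j) h; rewrite !mxE => hh.
  lra.
- have : x = 0.
    apply/rowP => j.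
    have := congr1 (fun m : 'rV[R]_n => m 0 j) h; rewrite !mxE => hh.
    lra.
  move=> x0.
  have : (0 < #|S|)%N by rewrite card.
  case/card_gt0P => i; rewrite inE => ai.
  by move: ai; rewrite -xa x0 /dotv mul0mx mxE eqxx.
Qed.
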